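(* For any graph $G$ with connected components $G_1,\dots,G_n$, we have $\lfloor \mathrm{sp}\rfloor(G)=\lfloor \mathrm{sp}\rfloor(G_1)+\cdots+\lfloor \mathrm{sp}\rfloor(G_n)$.
   Context: All graphs are finite, have at least one vertex, have no loops, and may have multiple (parallel) edges. A unique shortest path is a shortest $u$–$v$ path $P$ such that every $u$–$v$ path with the same number of vertices is identical to $P$, where two paths with different edge sequences are different even if their vertex sequences agree; a single vertex is a unique shortest path. The parade number $\mathrm{usp}(G)$ is the largest number of vertices of a unique shortest path in $G$. The spectator number is $\mathrm{sp}(G)=|V(G)|-\mathrm{usp}(G)$. A minor of $H$ is any graph obtained from $H$ by a sequence of: deleting an isolated vertex, deleting an edge, contracting an edge that has no edge parallel to it. The spectator floor $\lfloor \mathrm{sp}\rfloor(G)$ is the minimum of $\mathrm{sp}(H)$ over all graphs $H$ of which $G$ is a minor. *)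

(* Defs.v *)
From mathcomp Require Import all_boot.
From mathcomp Require Import boolp.
From Stdlib Require Import Relation_Operators.

Set Implicit Arguments.
Unset Strict Implicit.
Unset Printing Implicit Defensive.

(* A finite multigraph: finite vertex and edge types; every edge has an
   (arbitrarily oriented) pair of endpoints.  Parallel edges are allowed
   (distinct edges with the same endpoints). *)
Record mgraph := MGraph {
  vert : finType;
  edge : finType;
  ends : edge -> vert * vert }.

Definition incid (G : mgraph) (e : edge G) (x y : vert G) : bool :=
  (ends e == (x, y)) || (ends e == (y, x)).

Definition loopless (G : mgraph) : bool :=
  [forall e : edge G, (ends e).1 != (ends e).2].

Definition is_graph (G : mgraph) : bool := (0 < #|vert G|) && loopless G.

(* (vs, es) is a u-v path: vertex sequence vs = [v0; ..; vk] (distinct),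
   edge sequence es = [e1; ..; ek] with e_i joining v_{i-1} and v_i,
   v0 = u and vk = v. *)
Definition is_uv_path (G : mgraph) (u v : vert G)
    (vs : seq (vert G)) (es : seq (edge G)) : bool :=
  [&& size vs == (size es).+1, uniq vs, head u vs == u, last u vs == v &
      all2 (fun e p => incid e p.1 p.2) es (zip vs (behead vs))].

Definition is_usp (G : mgraph) (vs : seq (vert G)) (es : seq (edge G)) : Prop :=
  exists u v : vert G,
    [/\ is_uv_path u v vs es,
        (forall vs' es', is_uv_path u v vs' es' -> size vs <= size vs') &
        (forall vs' es', is_uv_path u v vs' es' -> size vs' = size vs ->
           vs' = vs /\ es' = es)].

(* parade number: largest number of vertices of a unique shortest path
   (a path has at most #|V| vertices) *)
Definition usp (G : mgraph) : nat :=
  \max_(k < #|vert G|.+1 | `[< exists vs es, @is_usp G vs es /\ size vs = k >]) k.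

Definition sp (G : mgraph) : nat := #|vert G| - usp G.

Definition compat (G' G : mgraph) (f : vert G' -> vert G) (g : edge G' -> edge G) :=
  forall e : edge G', incid (g e) (f (ends e).1) (f (ends e).2).

(* H' is (isomorphic to) H with the isolated vertex v deleted *)
Definition del_isolated_vertex (H H' : mgraph) : Prop :=
  exists v : vert H,
    (forall e : edge H, (ends e).1 != v /\ (ends e).2 != v) /\
    exists (f : vert H' -> vert H) (g : edge H' -> edge H),
      [/\ injective f, (forall x, x != v -> exists y, f y = x),
          (forall y, f y != v), bijective g & compat f g].

(* H' is (isomorphic to) H with the edge e0 deleted *)
Definition del_edge (H H' : mgraph) : Prop :=
  exists e0 : edge H,
    exists (f : vert H' -> vert H) (g : edge H' -> edge H),
      [/\ bijective f, injective g, (forall e, e != e0 -> exists e', g e' = e),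
          (forall e', g e' != e0) & compat f g].

(* H' is (isomorphic to) H with the edge e0 contracted, where e0 has no
   parallel edge: f merges exactly the two endpoints of e0, edges other than
   e0 survive with their endpoints mapped by f. *)
Definition contract_edge (H H' : mgraph) : Prop :=
  exists e0 : edge H,
    (forall e, e != e0 -> ~~ incid e (ends e0).1 (ends e0).2) /\
    exists (f : vert H -> vert H') (g : edge H' -> edge H),
      [/\ (forall y, exists x, f x = y),
          (forall x y, f x = f y <-> (x = y \/ incid e0 x y)),
          injective g,
          (forall e, e != e0 -> exists e', g e' = e) /\ (forall e', g e' != e0) &
          (forall e' : edge H', incid e' (f (ends (g e')).1) (f (ends (g e')).2))].

(* graph isomorphism (graphs are considered up to isomorphism) *)
Definition isomorphic (H H' : mgraph) : Prop :=
  exists (f : vert H' -> vert H) (g : edge H' -> edge H),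
    [/\ bijective f, bijective g & compat f g].

Definition minor_step (H H' : mgraph) : Prop :=
  [\/ isomorphic H H', del_isolated_vertex H H', del_edge H H' | contract_edge H H'].

Definition minor (G H : mgraph) : Prop := clos_refl_trans mgraph minor_step H G.

(* spectator floor: min of sp H over graphs H having G as a minor.
   When G is a graph, H = G is a candidate, so the minimum is <= sp G and it
   suffices to range over k <= sp G. *)
Definition spfloor (G : mgraph) : nat :=
  \big[minn/sp G]_(k < (sp G).+1 |
        `[< exists H : mgraph, [/\ is_graph H, minor G H & sp H = k] >]) k.

Definition adj (G : mgraph) : rel (vert G) := fun x y => [exists e, incid e x y].

Definition comp (G : mgraph) (x : vert G) : {set vert G} :=
  [set y | connect (@adj G) x y].

Definition components (G : mgraph) : {set {set vert G}} :=
  [set comp x | x : vert G].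

Section Induced.
Variables (G : mgraph) (C : {set vert G}).
Definition ind_vert := {x : vert G | x \in C}.
Definition ind_edge := {e : edge G | ((ends e).1 \in C) && ((ends e).2 \in C)}.
Definition ind_ends (e : ind_edge) : ind_vert * ind_vert :=
  let h := elimT andP (valP e) in
  (exist _ (ends (val e)).1 (proj1 h), exist _ (ends (val e)).2 (proj2 h)).
Definition induced : mgraph := @MGraph {x : vert G | x \in C} {e : edge G | ((ends e).1 \in C) && ((ends e).2 \in C)} ind_ends.
End Induced.

(* Main.v *)
Require Import Defs.
From mathcomp Require Import all_boot boolp.
From Stdlib Require Import Relation_Operators Operators_Properties.
From mathcomp Require Import zify.

Set Implicit Arguments.
Unset Strict Implicit.
Unset Printing Implicit Defensive.


Lemma incid_ends (G : mgraph) (e : edge G) : incid e (ends e).1 (ends e).2.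
Proof. by rewrite /incid -surjective_pairing eqxx. Qed.

Lemma incidC (G : mgraph) (e : edge G) x y : incid e x y = incid e y x.
Proof. by rewrite /incid orbC. Qed.

Lemma pair_eqE' (A B : eqType) (p : A * B) a b : (p == (a, b)) = (p.1 == a) && (p.2 == b).
Proof. by case: p. Qed.

Lemma incid_ind (G : mgraph) (C : {set vert G}) (e : edge (induced C)) x y :
  incid e x y = incid (val e) (val x) (val y).
Proof.
rewrite /incid /= /ind_ends !xpair_eqE !pair_eqE'.
by rewrite -!val_eqE.
Qed.

Definition embed (M N : mgraph) (f : vert M -> vert N) (g : edge M -> edge N) :=
  [/\ injective f, injective g & compat f g].

Lemma incid_embed M N f g : @embed M N f g ->
  forall e a b, incid (g e) (f a) (f b) = incid e a b.
Proof.
case=> fi gi cp e a b; move: (cp e).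
rewrite /incid [ends e]surjective_pairing /= !xpair_eqE.
case/orP=> /eqP ->; rewrite !xpair_eqE !(inj_eq fi);
by do !case: eqP.
Qed.

Fixpoint walk (G : mgraph) (x : vert G) (vs : seq (vert G)) (es : seq (edge G)) : bool :=
  match vs, es with
  | [::], [::] => true
  | y :: vs', e :: es' => incid e x y && walk y vs' es'
  | _, _ => false
  end.

Lemma all2_walk (G : mgraph) (x : vert G) tl es :
  all2 (fun e p => incid e p.1 p.2) es (zip (x :: tl) tl) = walk x tl es.
Proof.
elim: tl x es => [|y tl IH] x [|e es] //=.
by rewrite IH.
Qed.

Lemma walk_size (G : mgraph) (x : vert G) tl es : walk x tl es -> size tl = size es.
Proof. by elim: tl x es => [|y tl IH] x [|e es] //= /andP[_ /IH ->]. Qed.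

Lemma pathE (G : mgraph) (u v : vert G) vs es :
  is_uv_path u v vs es =
  if vs is x :: tl then [&& x == u, uniq (x :: tl), last x tl == v & walk x tl es]
  else false.
Proof.
rewrite /is_uv_path; case: vs => [|x tl] //=.
rewrite all2_walk eqSS.
case W: (walk x tl es); last by rewrite !andbF.
rewrite (walk_size W) eqxx /=.
rewrite andbT.
by rewrite andbCA.
Qed.

Lemma walk_embed M N f g : @embed M N f g ->
  forall x tl es, walk (f x) (map f tl) (map g es) = walk x tl es.
Proof.
move=> E x tl; elim: tl x => [|y tl IH] x [|e es] //=.
by rewrite IH (incid_embed E).
Qed.

Lemma path_embed M N f g : @embed M N f g ->
  forall u v vs es,
  is_uv_path (f u) (f v) (map f vs) (map g es) = is_uv_path u v vs es.
Proof.
move=> E u v [|x tl] es; rewrite !pathE //=.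
case: (E) => fi _ _.
by rewrite !(inj_eq fi) (map_inj_uniq fi) /= last_map (inj_eq fi) (walk_embed E) (mem_map fi).
Qed.

Lemma single_usp (N : mgraph) (x : vert N) : @is_usp N [:: x] [::].
Proof.
exists x, x; split; first by rewrite pathE /= eqxx.
- by move=> [|y tl] es; rewrite pathE.
- move=> [|y tl] es; rewrite pathE // => /and4P[/eqP -> _ _ W] /= [].
  case: tl W => // W _; case: es W => //.
Qed.

Lemma usp_le (N : mgraph) vs es : @is_usp N vs es -> size vs <= usp N.
Proof.
move=> U.
have uq : uniq vs by case: U => u [v [P _ _]]; move: P; rewrite /is_uv_path => /and5P[].
have hs : size vs < #|vert N|.+1 by rewrite ltnS -(card_uniqP uq) max_card.
rewrite /usp.
apply: (@leq_bigmax_cond _ _ (fun k : 'I_ _ => nat_of_ord k) (Ordinal hs)).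
by apply/asboolP; exists vs, es.
Qed.

Lemma usp_attained (N : mgraph) : 0 < #|vert N| ->
  exists vs es, @is_usp N vs es /\ size vs = usp N.
Proof.
move=> /card_gt0P [x _].
have h1 : 1 < #|vert N|.+1 by rewrite ltnS; apply/card_gt0P; exists x.
set P := (fun k : 'I_#|vert N|.+1 => `[< exists vs es, @is_usp N vs es /\ size vs = k >]).
have : 0 < #|P|.
  apply/card_gt0P; exists (Ordinal h1); rewrite /P /=; apply/asboolP.
  by exists [:: x], [::]; split => //; apply: single_usp.
move=> /(eq_bigmax_cond (fun k : 'I_#|vert N|.+1 => nat_of_ord k)) [i0 Hi Hmax].
move: Hi; rewrite /P /= => /asboolP [vs [es [U S]]].
exists vs, es; split => //; rewrite S /usp.
by rewrite -Hmax.
Qed.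

Lemma inj_surj_bij (A B : finType) (f : A -> B) :
  injective f -> (forall y, exists x, f x = y) -> bijective f.
Proof.
move=> fi fs.
have fs' : forall y, exists x, f x == y by move=> y; case: (fs y) => x <-; exists x.
exists (fun y => xchoose (fs' y)) => [x|y]; last exact/eqP/(xchooseP (fs' y)).
apply: fi; exact/eqP/(xchooseP (fs' (f x))).
Qed.

Definition deledge (N : mgraph) (e0 : edge N) : mgraph :=
  @MGraph (vert N) {e : edge N | e != e0} (fun e => ends (val e)).

Lemma minor_refl (M : mgraph) : minor M M.
Proof. exact: rt_refl. Qed.

Lemma minor_trans (A B C : mgraph) : minor A B -> minor B C -> minor A C.
Proof. move=> h1 h2; exact: (rt_trans _ _ _ _ _ h2 h1). Qed.

Lemma minor_step_minor (N N' : mgraph) : minor_step N N' -> minor N' N.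
Proof. exact: rt_step. Qed.

Lemma compat_incid M N (f : vert M -> vert N) g : compat f g ->
  forall e x, (ends (g e)).1 = x \/ (ends (g e)).2 = x ->
  exists2 y, f y = x & (ends e).1 = y \/ (ends e).2 = y.
Proof.
move=> cp e x; move: (cp e); rewrite /incid !pair_eqE'.
by case/orP=> /andP[/eqP -> /eqP ->] [] <-; eauto.
Qed.

Lemma embed_minor_n n : forall (M N : mgraph) f g,
  #|vert N| + #|edge N| <= n -> @embed M N f g -> minor M N.
Proof.
elim: n => [|n IH] M N f g Hn E; case: (E) => fi gi cp.
- have v0 : #|vert N| = 0 by move: Hn; case: #|vert N|.
  have e0 : #|edge N| = 0 by move: Hn; rewrite v0; case: #|edge N|.
  apply: minor_step_minor; apply: Or41; exists f, g; split => //.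
  + apply: inj_surj_bij => // y; move: (card0_eq v0 y); by rewrite inE.
  + apply: inj_surj_bij => // y; move: (card0_eq e0 y); by rewrite inE.
case: (boolP [exists e0, [forall e', g e' != e0]]) => [/existsP[e0 /forallP He0]|].
  pose N' := deledge e0.
  have st : minor_step N N'.
    apply: Or43; exists e0, id, val; split => //.
    - by exists id.
    - exact: val_inj.
    - by move=> e He; exists (exist _ e He).
    - by move=> e'; apply: (valP e').
    - by move=> e'; apply: incid_ends.
  apply: (minor_trans _ (minor_step_minor st)).
  apply: (IH M N' f (fun e => exist _ (g e) (He0 e))).
    rewrite /N' /= card_sig.
    have h : #|[pred e | e != e0]| = #|edge N|.-1 by rewrite -(cardC1 e0).
    have hp : 0 < #|edge N| by apply/card_gt0P; exists e0.
    by rewrite h; move: Hn; rewrite -{1}(prednK hp) addnS ltnS.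
  split => //; first by move=> a b [] /gi.
move/existsPn => He.
have gs : forall e, exists e', g e' = e.
  by move=> e; move/forallPn: (He e) => [e' /negPn/eqP <-]; exists e'.
case: (boolP [exists v, [forall x, f x != v]]) => [/existsP[v /forallP Hv]|].
  pose C := [set~ v].
  have iso : forall e : edge N, ((ends e).1 \in C) && ((ends e).2 \in C).
    move=> e; case: (gs e) => e' <-.
    rewrite !inE; apply/andP; split;
      [case: (@compat_incid _ _ _ _ cp e' _ (or_introl erefl)) | case: (@compat_incid _ _ _ _ cp e' _ (or_intror erefl))];
      move=> y <- _; exact: Hv.
  pose N' := induced C.
  have st : minor_step N N'.
    apply: Or42; exists v; split.
      by move=> e; move: (iso e); rewrite !inE => /andP[-> ->].
    exists val, val; split.
    - exact: val_inj.
    - move=> x Hx; have Hx' : x \in C by rewrite !inE.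
      by exists (exist (fun x => x \in C) x Hx').
    - by move=> y; move: (valP y); rewrite !inE.
    - apply: inj_surj_bij; first exact: val_inj.
      by move=> e; exists (exist _ e (iso e)).
    - by move=> e; apply: incid_ends.
  apply: (minor_trans _ (minor_step_minor st)).
  have Hf : forall x, f x \in C by move=> x; rewrite !inE; exact: Hv.
  have Hg : forall e, ((ends (g e)).1 \in C) && ((ends (g e)).2 \in C) by move=> e; exact: iso.
  apply: (IH M N' (fun x => exist _ (f x) (Hf x)) (fun e => exist _ (g e) (Hg e))).
    have h1 : #|vert N'| = #|vert N|.-1.
      by rewrite /N' /= card_sig -(cardsC1 v); apply: eq_card => x; rewrite !inE.
    have h2 : #|edge N'| <= #|edge N| by rewrite /N' /= card_sig max_card.
    have hp : 0 < #|vert N| by apply/card_gt0P; exists v.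
    rewrite h1; move: Hn; rewrite -{1}(prednK hp) addSn ltnS => Hn.
    by apply: leq_trans Hn; rewrite leq_add2l.
  split.
  - by move=> a b [] /fi.
  - by move=> a b [] /gi.
  - by move=> e; rewrite incid_ind /=; apply: cp.
move/existsPn => Hv.
have fs : forall y, exists x, f x = y.
  by move=> y; move/forallPn: (Hv y) => [x /negPn/eqP <-]; exists x.
apply: minor_step_minor; apply: Or41; exists f, g; split => //; exact: inj_surj_bij.
Qed.

Lemma embed_minor (M N : mgraph) f g : @embed M N f g -> minor M N.
Proof. exact: embed_minor_n. Qed.


Lemma bigminn_le_idx (I : finType) (P : pred I) (F : I -> nat) x :
  \big[minn/x]_(i | P i) F i <= x.
Proof. elim/big_rec: _ => // i y _ h; exact: leq_trans (geq_minr _ _) h. Qed.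

Lemma bigminn_le_seq (I : eqType) (r : seq I) (P : pred I) (F : I -> nat) x j :
  j \in r -> P j -> \big[minn/x]_(i <- r | P i) F i <= F j.
Proof.
elim: r => [|a r IH] //; rewrite big_cons inE => /orP[/eqP <- | jr] Pj.
  by rewrite Pj geq_minl.
case: ifP => _; last exact: IH.
exact: leq_trans (geq_minr _ _) (IH jr Pj).
Qed.

Lemma bigminn_le_cond (I : finType) (P : pred I) (F : I -> nat) x j :
  P j -> \big[minn/x]_(i | P i) F i <= F j.
Proof. by move=> Pj; apply: bigminn_le_seq => //; rewrite mem_index_enum. Qed.

Lemma bigminn_attained (I : finType) (P : pred I) (F : I -> nat) x :
  \big[minn/x]_(i | P i) F i = x \/ exists2 i, P i & \big[minn/x]_(i | P i) F i = F i.
Proof.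
elim/big_ind: _; [by left| |by move=> i Pi; right; exists i].
move=> a b ha hb; rewrite /minn; case: ifP => _; [exact: ha|exact: hb].
Qed.

Lemma spfloor_le_sp (A : mgraph) : spfloor A <= sp A.
Proof. exact: bigminn_le_idx. Qed.

Lemma spfloor_le (A H : mgraph) : is_graph H -> minor A H -> spfloor A <= sp H.
Proof.
move=> gH mAH; case: (leqP (sp H) (sp A)) => h.
  have hs : sp H < (sp A).+1 by [].
  apply: (@bigminn_le_cond _ _ (fun k : 'I_(sp A).+1 => nat_of_ord k) _ (Ordinal hs)).
  by apply/asboolP; exists H.
exact: leq_trans (spfloor_le_sp A) (ltnW h).
Qed.

Lemma spfloor_witness (B : mgraph) : is_graph B ->
  exists H, [/\ is_graph H, minor B H & sp H = spfloor B].
Proof.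
move=> gB; rewrite /spfloor.
case: (bigminn_attained (fun k : 'I_(sp B).+1 => `[< exists H : mgraph, [/\ is_graph H, minor B H & sp H = k] >]) (fun k => nat_of_ord k) (sp B)) => [->|[i /asboolP Pi ->]]; last exact: Pi.
by exists B; split => //; apply: minor_refl.
Qed.

Lemma spfloor_mono (A B : mgraph) : is_graph B -> minor A B -> spfloor A <= spfloor B.
Proof.
move=> gB mAB; case: (spfloor_witness gB) => H [gH mBH <-].
exact: spfloor_le gH (minor_trans mAB mBH).
Qed.

Lemma spfloor0 (A : mgraph) : #|vert A| = 0 -> spfloor A = 0.
Proof.
move=> h; apply/eqP; rewrite -leqn0; apply: leq_trans (spfloor_le_sp A) _.
by rewrite /sp h.
Qed.

Lemma card_ind (G : mgraph) (C : {set vert G}) : #|vert (induced C)| = #|C|.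
Proof. by rewrite /= card_sig; apply: eq_card => x; rewrite inE. Qed.

Lemma loopless_ind (G : mgraph) (C : {set vert G}) : loopless G -> loopless (induced C).
Proof.
move=> /forallP L; apply/forallP => e; rewrite -val_eqE /=; exact: L.
Qed.

Lemma is_graph_ind (G : mgraph) (C : {set vert G}) : loopless G -> 0 < #|C| ->
  is_graph (induced C).
Proof. by move=> L h; rewrite /is_graph card_ind h loopless_ind. Qed.

Lemma embed_ind_sub (G : mgraph) (X Y : {set vert G}) : X \subset Y ->
  exists f g, @embed (induced X) (induced Y) f g.
Proof.
move=> /subsetP sXY.
have hf : forall x : vert (induced X), val x \in Y by move=> x; apply: sXY; exact: valP x.
have hg : forall e : edge (induced X), ((ends (val e)).1 \in Y) && ((ends (val e)).2 \in Y).
  by move=> e; case/andP: (valP e) => h1 h2; rewrite !sXY.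
exists (fun x => exist _ (val x) (hf x)), (fun e => exist _ (val e) (hg e)); split.
- by move=> a b [] /val_inj.
- by move=> a b [] /val_inj.
- by move=> e; rewrite incid_ind /= incid_ends.
Qed.

Lemma lift_seq (T : Type) (P : pred T) (s : seq T) : all P s ->
  exists s' : seq {x | P x}, map val s' = s.
Proof.
elim: s => [|x s IH] /=; first by exists [::].
case/andP=> Px /IH [s' <-]; by exists (exist _ x Px :: s').
Qed.

Lemma walk_ends (G : mgraph) (x : vert G) tl es e : walk x tl es -> e \in es ->
  ((ends e).1 \in x :: tl) && ((ends e).2 \in x :: tl).
Proof.
elim: tl x es => [|y tl IH] x [|e' es] //= /andP[I W].
rewrite inE => /orP [/eqP ->|/(IH _ _ W)].
  move: I; rewrite /incid !pair_eqE' => /orP[] /andP[/eqP -> /eqP ->];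
  by rewrite !inE !eqxx ?orbT.
by rewrite !inE => /andP[/orP[->|->] /orP[->|->]]; rewrite ?orbT.
Qed.

Lemma usp_lift M N f g : @embed M N f g -> forall vs es,
  @is_usp N (map f vs) (map g es) -> @is_usp M vs es.
Proof.
move=> E vs es [u [v [P S U]]].
case: vs P S U => [|x tl]; first by rewrite pathE.
move=> P S U.
have := P; rewrite pathE /= => /and4P [/eqP Hu _ /eqP Hv _].
rewrite last_map in Hv; subst u v.
have PE : forall vs' es', is_uv_path (f x) (f (last x tl)) (map f vs') (map g es') =
   is_uv_path x (last x tl) vs' es' by move=> vs' es'; rewrite (path_embed E).
exists x, (last x tl); split.
- by rewrite -PE.
- move=> vs' es' P2; rewrite -(size_map f) -(size_map f vs').
  by apply: (S _ (map g es')); rewrite PE.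
- move=> vs' es' P2 Sz.
  have P3 := P2; rewrite -PE in P3.
  case: (U _ _ P3); first by rewrite !size_map Sz.
  case: E => fi gi _.
  by move=> /(inj_map fi) -> /(inj_map gi) ->.
Qed.


Lemma embed_val (G : mgraph) (C : {set vert G}) :
  @embed (induced C) G val val.
Proof. split; [exact: val_inj|exact: val_inj|move=> e; exact: incid_ends]. Qed.

Lemma base_bound (H : mgraph) vsP esP (X : {set vert H}) :
  loopless H -> @is_usp H vsP esP ->
  spfloor (induced X) <= #|X :\: [set x in vsP]|.
Proof.
move=> L U.
have U' := U; case: U' => u [v [Pth _ _]].
case: vsP U Pth => [|x tl] U Pth; first by rewrite pathE in Pth.
set Vp := [set y in x :: tl]; set Y := X :|: Vp.
have [f [g E]] := embed_ind_sub (subsetUl X Vp).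
move: Pth; rewrite pathE => /and4P[_ uq _ W].
have inVp : forall y, (y \in Vp) = (y \in x :: tl) by move=> y; rewrite inE.
have inY : forall y, (y \in Y) = (y \in X) || (y \in x :: tl).
  by move=> y; rewrite /Y in_setU inVp.
have allV : all (fun y => y \in Y) (x :: tl).
  by apply/allP => y yin; rewrite inY yin orbT.
have allE : all (fun e => ((ends e).1 \in Y) && ((ends e).2 \in Y)) esP.
  apply/allP => e ein; case/andP: (walk_ends W ein) => h1 h2.
  by rewrite !inY h1 h2 !orbT.
have [vs' Hvs] := lift_seq allV.
have [es' Hes] := lift_seq allE.
have U2 : @is_usp (induced Y) vs' es'.
  apply: (usp_lift (embed_val Y)); by rewrite Hvs Hes.
have gY : is_graph (induced Y).
  apply: is_graph_ind => //; apply/card_gt0P; exists x; by rewrite inY mem_head orbT.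
apply: leq_trans (spfloor_le gY (embed_minor E)) _.
have h1 := usp_le U2.
have h2 : size vs' = size (x :: tl) by rewrite -Hvs size_map.
rewrite h2 in h1.
have cV : #|Vp| = size (x :: tl) by rewrite cardsE; apply/card_uniqP.
rewrite /sp card_ind.
have c1 : #|Y| + #|X :&: Vp| = #|X| + #|Vp| := cardsUI X Vp.
have c2 := cardsID Vp X.
lia.
Qed.

Lemma sum_bound (T : finType) (F : {set {set T}}) (W : {set T}) :
  trivIset F -> \sum_(X in F) #|X :\: W| <= #|T| - #|W|.
Proof.
move=> tF.
have e1 : forall X : {set T}, #|X :\: W| = \sum_(x in X | x \notin W) 1.
  move=> X; rewrite sum1dep_card; apply: eq_card => x; by rewrite !inE andbC.
rewrite (eq_bigr _ (fun X _ => e1 X)) -big_trivIset_cond // sum1dep_card.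
have c := cardsC W.
have : #|[set x | (x \in cover F) && (x \notin W)]| <= #|~: W|.
  by apply: subset_leq_card; apply/subsetP => x; rewrite !inE => /andP[].
lia.
Qed.


Definition step_ok (M M' : mgraph) :=
  loopless M' /\ exists phi : {set vert M'} -> {set vert M},
    [/\ injective phi, (forall A B : {set vert M'}, [disjoint A & B] -> [disjoint phi A & phi B])
      & forall X, spfloor (induced X) <= spfloor (induced (phi X))].

Lemma spfloor_set0 (G : mgraph) (X : {set vert G}) : X = set0 -> spfloor (induced X) = 0.
Proof. by move=> ->; apply: spfloor0; rewrite card_ind cards0. Qed.

Lemma loopless_ends (G : mgraph) (e : edge G) : loopless G -> (ends e).1 != (ends e).2.
Proof. by move/forallP. Qed.

Lemma embed_step_ok M' M f g : @embed M' M f g -> loopless M -> step_ok M M'.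
Proof.
move=> E L; case: (E) => fi gi cp; split.
  apply/forallP => e; apply/negP => /eqP h.
  move: (cp e); rewrite h /incid orbb => /eqP h2.
  by move: (loopless_ends (g e) L); rewrite h2 eqxx.
exists (fun X : {set vert M'} => f @: X); split.
- exact: imset_inj.
- move=> A B; rewrite -!setI_eq0 -imsetI; last by move=> x y _ _; apply: fi.
  by move/eqP ->; rewrite imset0.
move=> X; case: (set_0Vmem X) => [->|[x0 x0X]]; first by rewrite spfloor_set0.
have gY : is_graph (induced (f @: X)).
  by apply: is_graph_ind => //; apply/card_gt0P; exists (f x0); apply: imset_f.
apply: spfloor_mono gY _.
have hf : forall x : vert (induced X), f (val x) \in f @: X by move=> x; apply: imset_f; exact: valP.
have hg : forall e : edge (induced X),
    ((ends (g (val e))).1 \in f @: X) && ((ends (g (val e))).2 \in f @: X).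
  move=> e; case/andP: (valP e) => h1 h2.
  apply/andP; split;
  [case: (@compat_incid _ _ _ _ cp (val e) _ (or_introl erefl)) |
   case: (@compat_incid _ _ _ _ cp (val e) _ (or_intror erefl))];
  by move=> y <- [] <-; apply: imset_f.
pose f' : vert (induced X) -> vert (induced (f @: X)) := fun x => exist _ (f (val x)) (hf x).
pose g' : edge (induced X) -> edge (induced (f @: X)) := fun e => exist _ (g (val e)) (hg e).
apply: (@embed_minor _ _ f' g').
split.
- by move=> a b [] /fi /val_inj.
- by move=> a b [] /gi /val_inj.
- by move=> e; rewrite incid_ind /=; apply: cp.
Qed.

Lemma incid_pair (G : mgraph) (e : edge G) x y :
  incid e x y -> ends e = (x, y) \/ ends e = (y, x).
Proof. by case/orP => /eqP; auto. Qed.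

Lemma incid_swap (G : mgraph) (e e' : edge G) :
  incid e (ends e').1 (ends e').2 -> incid e' (ends e).1 (ends e).2.
Proof.
case/incid_pair => ->; rewrite /=; first exact: incid_ends.
rewrite incidC; exact: incid_ends.
Qed.

Lemma contract_step_ok M M' : contract_edge M M' -> loopless M -> step_ok M M'.
Proof.
case=> e0 [np [f [g [fs feq gi [gcov gne] gin]]]] L.
split.
  apply/forallP => e'; apply/negP => /eqP h.
  have hf : f (ends (g e')).1 = f (ends (g e')).2.
    by case: (incid_pair (gin e')) => h2; rewrite h2 /= in h.
  case/feq: hf => [h2|h2].
    by move: (loopless_ends (g e') L); rewrite h2 eqxx.
  by move: (np _ (gne e')); rewrite (incid_swap h2).
exists (fun X : {set vert M'} => f @^-1: X); split.
- move=> A B h; apply/setP => y; case: (fs y) => x <-.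
  by move/setP: h => /(_ x); rewrite !inE.
- move=> A B; rewrite -!setI_eq0 -preimsetI => /eqP ->; by rewrite preimset0.
move=> X; case: (set_0Vmem X) => [->|[y0 y0X]]; first by rewrite spfloor_set0.
set pre := f @^-1: X.
have inpre : forall x, (x \in pre) = (f x \in X) by move=> x; rewrite inE.
have gY : is_graph (induced pre).
  apply: is_graph_ind => //; apply/card_gt0P; case: (fs y0) => x0 hx0.
  by exists x0; rewrite inpre hx0.
apply: spfloor_mono gY _.
have hg : forall e : edge (induced X),
    ((ends (g (val e))).1 \in pre) && ((ends (g (val e))).2 \in pre).
  move=> e; case/andP: (valP e) => h1 h2; rewrite !inpre.
  by case: (incid_pair (gin (val e))) => h3; rewrite h3 /= in h1 h2; rewrite h1 h2.
pose g' : edge (induced X) -> edge (induced pre) := fun e => exist _ (g (val e)) (hg e).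
case: (boolP (((ends e0).1 \in pre) && ((ends e0).2 \in pre))) => [In | Nin].
  apply: minor_step_minor; apply: Or44.
  pose e0' : edge (induced pre) := exist _ e0 In.
  have hf : forall x : vert (induced pre), f (val x) \in X by move=> x; rewrite -inpre (valP x).
  pose f' : vert (induced pre) -> vert (induced X) := fun x => exist _ (f (val x)) (hf x).
  exists e0'; split.
    by move=> e he; rewrite incid_ind /=; apply: np; rewrite -val_eqE /= in he.
  exists f', g'; split.
  - move=> y; case: (fs (val y)) => x hx.
    have xin : x \in pre by rewrite inpre hx (valP y).
    by exists (exist _ x xin); apply: val_inj; rewrite /= hx.
  - move=> x y; rewrite incid_ind /=; split.
      move=> [] /feq [/val_inj ->|h]; [by left|by right].
    case=> [->|h]; first by [].
    by apply: val_inj; rewrite /=; apply/feq; right.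
  - by move=> a b [] /gi /val_inj.
  - split.
      move=> e he; have he' : val e != e0 by rewrite -val_eqE /= in he.
      case: (gcov _ he') => e' he''.
      have ein : ((ends e').1 \in X) && ((ends e').2 \in X).
        case/andP: (valP e) => h1 h2; rewrite -he'' !inpre in h1 h2.
        by case: (incid_pair (gin e')) => ->; rewrite /= h1 h2.
      by exists (exist _ e' ein); apply: val_inj; rewrite /= he''.
    by move=> e'; rewrite -val_eqE /=; apply: gne.
  - by move=> e'; rewrite incid_ind /=; apply: gin.
have fs' : forall y, exists x, f x == y by move=> y; case: (fs y) => x <-; exists x.
pose finv y := xchoose (fs' y).
have ffinv : forall y, f (finv y) = y by move=> y; apply/eqP/(xchooseP (fs' y)).
have finvf : forall x, x \in pre -> finv (f x) = x.
  move=> x xin; case/feq: (ffinv (f x)) => // h.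
  have h1 : finv (f x) \in pre by rewrite inpre ffinv -inpre.
  case: (incid_pair h) => h2; rewrite h2 /= in Nin; by rewrite h1 xin in Nin.
have hh : forall y : vert (induced X), finv (val y) \in pre by move=> y; rewrite inpre ffinv (valP y).
pose h : vert (induced X) -> vert (induced pre) := fun y => exist _ (finv (val y)) (hh y).
apply: (@embed_minor _ _ h g'); split.
- move=> a b [] /(congr1 f); rewrite !ffinv; exact: val_inj.
- by move=> a b [] /gi /val_inj.
move=> e; rewrite incid_ind /=.
case/andP: (valP (g' e)) => p1 p2; rewrite /= in p1 p2.
case: (incid_pair (gin (val e))) => ->; rewrite /= !finvf //; first exact: incid_ends.
rewrite incidC; exact: incid_ends.
Qed.

Lemma step_ok_of (M M' : mgraph) : minor_step M M' -> loopless M -> step_ok M M'.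
Proof.
case.
- case=> f [g [fb gb cp]]; apply: embed_step_ok; split => //; exact: bij_inj.
- case=> v [_ [f [g [fi _ _ gb cp]]]]; apply: embed_step_ok; split; [exact: fi|exact: (bij_inj gb)|exact: cp].
- case=> e0 [f [g [fb gi _ _ cp]]]; apply: embed_step_ok; split; [exact: (bij_inj fb)|exact: gi|exact: cp].
- exact: contract_step_ok.
Qed.


Lemma usp_uniq (G : mgraph) vs es : @is_usp G vs es -> uniq vs.
Proof. by case=> u [v [P _ _]]; move: P => /and5P[]. Qed.

Definition Phi (s : nat) (M : mgraph) := loopless M /\
  forall F : {set {set vert M}}, trivIset F -> \sum_(X in F) spfloor (induced X) <= s.

Lemma Phi_base (H : mgraph) : is_graph H -> Phi (sp H) H.
Proof.
case/andP=> c L; split => // F tF.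
case: (usp_attained c) => vs [es [U S]].
have h1 : \sum_(X in F) spfloor (induced X) <= \sum_(X in F) #|X :\: [set x in vs]|.
  by apply: leq_sum => X _; apply: base_bound L U.
apply: leq_trans h1 _.
apply: leq_trans (sum_bound _ tF) _.
rewrite /sp -S cardsE (card_uniqP (usp_uniq U)) //.
Qed.

Lemma Phi_step (s : nat) (M M' : mgraph) : minor_step M M' -> Phi s M -> Phi s M'.
Proof.
move=> st [L HM]; case: (step_ok_of st L) => L' [phi [pi pd ps]].
split => // F tF.
have h1 : \sum_(X in F) spfloor (induced X) <= \sum_(X in F) spfloor (induced (phi X)).
  by apply: leq_sum => X _; apply: ps.
apply: leq_trans h1 _.
rewrite -(big_imset (fun X => spfloor (induced X)) (in2W pi)).
apply: HM; apply/trivIsetP => A B /imsetP[A' A'in ->] /imsetP[B' B'in ->] ne.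
apply: pd; move/trivIsetP: tF; apply => //.
by apply: contraNneq ne => ->.
Qed.

Lemma lower_bound (G H : mgraph) : is_graph H -> minor G H ->
  forall F : {set {set vert G}}, trivIset F -> \sum_(X in F) spfloor (induced X) <= sp H.
Proof.
move=> gH m.
suff : Phi (sp H) G by case.
move: (sp H) (Phi_base gH) => s.
have m1 := clos_rt_rt1n _ _ _ _ m.
elim: m1 => // x y z st _ IH Px; apply: IH; exact: Phi_step st Px.
Qed.



Lemma adj_sym (G : mgraph) : symmetric (@adj G).
Proof.
move=> x y; apply/existsP/existsP => [] [e he]; exists e; by rewrite incidC.
Qed.

Lemma mem_comp (G : mgraph) (x : vert G) : x \in Defs.comp x.
Proof. by rewrite inE connect0. Qed.

Lemma comp_eq (G : mgraph) (x y : vert G) : connect (@adj G) x y -> Defs.comp x = Defs.comp y.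
Proof.
move=> cxy; apply/setP => z; rewrite !inE; apply/idP/idP => h.
  by apply: connect_trans h; rewrite (sym_connect_sym (@adj_sym G)) cxy.
exact: connect_trans cxy h.
Qed.

Lemma comp_mem (G : mgraph) (x y : vert G) : y \in Defs.comp x -> Defs.comp y = Defs.comp x.
Proof. by rewrite inE => h; rewrite (comp_eq h). Qed.

Lemma comp_edge (G : mgraph) (e : edge G) : Defs.comp (ends e).1 = Defs.comp (ends e).2.
Proof.
apply: comp_eq; apply: connect1; apply/existsP; exists e; exact: incid_ends.
Qed.

Lemma triv_components (G : mgraph) : trivIset (components G).
Proof.
apply/trivIsetP => A B /imsetP[x _ ->] /imsetP[y _ ->] ne.
rewrite -setI_eq0; apply/eqP/setP => z; rewrite !inE.
apply/negP => /andP[h1 h2].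
move/eqP: ne; apply.
by rewrite (comp_eq h1) (comp_eq h2).
Qed.

Lemma cover_components (G : mgraph) : cover (components G) = setT.
Proof.
apply/setP => x; rewrite inE; apply/bigcupP; exists (Defs.comp x); last exact: mem_comp.
by apply: imset_f.
Qed.

Lemma comp_closed (G : mgraph) (C : {set vert G}) (e : edge G) : C \in components G ->
  ((ends e).1 \in C) = ((ends e).2 \in C).
Proof.
case/imsetP => x _ ->; rewrite !inE.
apply/idP/idP => h.
  apply: connect_trans h _; apply: connect1; apply/existsP; exists e; exact: incid_ends.
apply: connect_trans h _; apply: connect1; apply/existsP; exists e; rewrite incidC; exact: incid_ends.
Qed.


Definition sum_ends (M N : mgraph) (e : (edge M + edge N)%type) : (vert M + vert N) * (vert M + vert N) :=
  match e with
  | inl e => (inl (ends e).1, inl (ends e).2)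
  | inr e => (inr (ends e).1, inr (ends e).2)
  end.

Definition gsum (M N : mgraph) : mgraph :=
  @MGraph (vert M + vert N)%type (edge M + edge N)%type (@sum_ends M N).

Lemma incid_sum_ll M N (e : edge M) x y :
  incid (G := gsum M N) (inl e) (inl x) (inl y) = incid e x y.
Proof. by rewrite /incid /= !xpair_eqE !pair_eqE'. Qed.

Lemma incid_sum_rr M N (e : edge N) x y :
  incid (G := gsum M N) (inr e) (inr x) (inr y) = incid e x y.
Proof. by rewrite /incid /= !xpair_eqE !pair_eqE'. Qed.

Lemma incid_sum_l M N (e : edge M) u w : incid (G := gsum M N) (inl e) u w ->
  exists x y, [/\ u = inl x, w = inl y & incid e x y].
Proof.
case: u => x; case: w => y h; try by move: h; rewrite /incid /= !xpair_eqE ?andbF.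
by exists x, y; split => //; move: h; rewrite incid_sum_ll.
Qed.

Definition smap (A A' B : Type) (f : A -> A') (v : A + B) : A' + B :=
  match v with inl x => inl (f x) | inr y => inr y end.

Lemma smap_inj (A A' B : Type) (f : A -> A') : injective f -> injective (@smap A A' B f).
Proof. by move=> fi [a|a] [b|b] //= [] => [/fi|] ->. Qed.

Lemma embed_suml M' M N f g : @embed M' M f g ->
  @embed (gsum M' N) (gsum M N) (smap f) (smap g).
Proof.
case=> fi gi cp; split; try exact: smap_inj.
case=> e /=; first by rewrite incid_sum_ll; apply: cp.
by rewrite incid_sum_rr incid_ends.
Qed.

Lemma contract_suml M M' N : contract_edge M M' -> contract_edge (gsum M N) (gsum M' N).
Proof.
case=> e0 [np [f [g [fs feq gi [gcov gne] gin]]]].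
exists (inl e0); split.
  case=> e /= he; last by rewrite /incid /=.
  rewrite incid_sum_ll; apply: np; by apply: contra he => /eqP ->.
exists (smap f), (smap g); split.
- case=> y; last by exists (inr y).
  by case: (fs y) => x <-; exists (inl x).
- move=> [x|x] [y|y] /=; split => //.
  + case=> /feq [->|h]; [by left|right].
    by rewrite incid_sum_ll.
  + case=> [[->]//|]; rewrite incid_sum_ll => h; congr inl; apply/feq; by right.
  all: try by case=> // /incid_sum_l [a [b [? ? _]]].
  + by case=> ->; left.
  + by case=> [[->] // | /incid_sum_l [a [b [? ? _]]]].
- exact: smap_inj gi.
- split.
    case=> e he; last by exists (inr e).
    have he' : e != e0 by apply: contra he => /eqP ->.
    by case: (gcov _ he') => e' <-; exists (inl e').
  by case=> e' //=; apply: contra (gne e') => /eqP [] ->.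
- case=> e' /=; first by rewrite incid_sum_ll; apply: gin.
  by rewrite incid_sum_rr incid_ends.
Qed.

Lemma step_cases (M M1 : mgraph) : minor_step M M1 ->
  (exists f g, @embed M1 M f g) \/ contract_edge M M1.
Proof.
case.
- case=> f [g [fb gb cp]]; left; exists f, g; split; [exact: (bij_inj fb)|exact: (bij_inj gb)|exact: cp].
- case=> v [_ [f [g [fi _ _ gb cp]]]]; left; exists f, g; split; [exact: fi|exact: (bij_inj gb)|exact: cp].
- case=> e0 [f [g [fb gi _ _ cp]]]; left; exists f, g; split; [exact: (bij_inj fb)|exact: gi|exact: cp].
- by right.
Qed.

Lemma minor_suml (M' M N : mgraph) : minor M' M -> minor (gsum M' N) (gsum M N).
Proof.
move=> m; have m1 := clos_rt_rt1n _ _ _ _ m.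
elim: m1 => [x|x y z st _ IH]; first exact: minor_refl.
apply: minor_trans IH _.
case: (step_cases st) => [[f [g E]]|C].
  exact: embed_minor (embed_suml N E).
by apply: minor_step_minor; apply: Or44; apply: contract_suml.
Qed.

Definition swp (A B : Type) (v : A + B) : B + A :=
  match v with inl x => inr x | inr y => inl y end.

Lemma swp_inj (A B : Type) : injective (@swp A B).
Proof. by move=> [a|a] [b|b] //= [] ->. Qed.

Lemma minor_swap (M N : mgraph) : minor (gsum M N) (gsum N M).
Proof.
pose f : vert (gsum M N) -> vert (gsum N M) := @swp _ _.
pose g : edge (gsum M N) -> edge (gsum N M) := @swp _ _.
apply: (@embed_minor _ _ f g); split; try exact: swp_inj.
case=> e /=; [rewrite incid_sum_rr|rewrite incid_sum_ll]; exact: incid_ends.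
Qed.

Lemma minor_sumr (M N' N : mgraph) : minor N' N -> minor (gsum M N') (gsum M N).
Proof.
move=> m; apply: minor_trans (minor_swap _ _) _.
apply: minor_trans (minor_suml M m) _; exact: minor_swap.
Qed.

Lemma minor_sum (A B HA HB : mgraph) : minor A HA -> minor B HB -> minor (gsum A B) (gsum HA HB).
Proof. move=> mA mB; apply: minor_trans (minor_suml B mA) _; exact: minor_sumr. Qed.



Definition join_ends (M N : mgraph) (a : vert M) (b : vert N) (e : option (edge M + edge N)) : (vert M + vert N) * (vert M + vert N) :=
  match e with None => (inl a, inr b) | Some e => sum_ends e end.

Definition gjoin (M N : mgraph) (a : vert M) (b : vert N) : mgraph :=
  @MGraph (vert M + vert N)%type (option (edge M + edge N)) (join_ends a b).

Lemma incid_join_some (M N : mgraph) (a : vert M) (b : vert N) (e : edge (gsum M N)) u w :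
  incid (G := gjoin a b) (Some e) u w = incid (G := gsum M N) e u w.
Proof. by []. Qed.

Lemma incid_join_none (M N : mgraph) (a : vert M) (b : vert N) u w :
  incid (G := gjoin a b) None u w = ((u == inl a) && (w == inr b)) || ((u == inr b) && (w == inl a)).
Proof. by rewrite /incid /= !xpair_eqE; apply/idP/idP => /orP[] /andP[/eqP <- /eqP <-]; rewrite !eqxx ?orbT. Qed.

Lemma incid_sum_r (M N : mgraph) (e : edge N) u w : incid (G := gsum M N) (inr e) u w ->
  exists x y, [/\ u = inr x, w = inr y & incid e x y].
Proof.
case: u => x; case: w => y h; try by move: h; rewrite /incid /= !xpair_eqE ?andbF.
by exists x, y; split => //; move: h; rewrite incid_sum_rr.
Qed.

Lemma sum_join_minor (M N : mgraph) (a : vert M) (b : vert N) : minor (gsum M N) (gjoin a b).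
Proof.
pose f : vert (gsum M N) -> vert (gjoin a b) := id.
pose g : edge (gsum M N) -> edge (gjoin a b) := Some.
apply: (@embed_minor _ _ f g); split => //.
- by move=> x y [].
- by move=> e; rewrite /f /g incid_join_some incid_ends.
Qed.

Lemma gjoin_graph (M N : mgraph) (a : vert M) (b : vert N) : loopless M -> loopless N -> is_graph (gjoin a b).
Proof.
move=> LM LN; apply/andP; split.
  by apply/card_gt0P; exists (inl a).
apply/forallP => [[[e|e]|]] //=; exact: loopless_ends.
Qed.

Lemma walk_phase2 (M N : mgraph) (a : vert M) (b : vert N) (c : vert N) tl es : walk (G := gjoin a b) (inr c) tl es -> inl a \notin tl ->
  exists tlB esB, [/\ tl = map inr tlB, es = map (fun e => Some (inr e)) esB & walk c tlB esB].
Proof.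
elim: tl c es => [|y tl IH] c [|e es] //=.
  by move=> _ _; exists [::], [::].
rewrite inE negb_or => /andP[I W] /andP[ya atl].
case: e I => [[e|e]|].
- by rewrite incid_join_some => /incid_sum_l [? [? []]].
- rewrite incid_join_some => /incid_sum_r [x [d [[<-] yd Ie]]].
  subst y; case: (IH d es W atl) => tlB [esB [-> -> W2]].
  by exists (d :: tlB), (e :: esB); rewrite /= Ie W2.
- by rewrite incid_join_none /= => /andP[_ /eqP yeq]; rewrite yeq eqxx in ya.
Qed.

Lemma walk_phase1 (M N : mgraph) (a : vert M) (b : vert N) (x : vert M) tl es (z : vert N) :
  walk (G := gjoin a b) (inl x) tl es -> uniq (inl x :: tl) -> last (inl x) tl = inr z ->
  exists tlA esA tlB esB,
    [/\ tl = map inl tlA ++ inr b :: map inr tlB,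
        es = map (fun e => Some (inl e)) esA ++ None :: map (fun e => Some (inr e)) esB,
        walk x tlA esA, last x tlA = a &
        walk b tlB esB /\ last b tlB = z].
Proof.
elim: tl x es => [|y tl IH] x [|e es] //=.
move=> /andP[I W] /andP[xn U] L.
case: y I W xn U L => y I W xn U L.
- case: e I => [[e|e]|].
  + rewrite incid_join_some incid_sum_ll => Ie.
    case: (IH y es W U L) => tlA [esA [tlB [esB [-> -> WA LA [WB LB]]]]].
    by exists (y :: tlA), (e :: esA), tlB, esB; split => //=; rewrite Ie WA.
  + by rewrite incid_join_some => /incid_sum_r [? [? []]].
  + by rewrite incid_join_none => /orP[] /andP[].

- case: e I => [[e|e]|].
  + by rewrite incid_join_some => /incid_sum_l [? [? [_ []]]].
  + by rewrite incid_join_some => /incid_sum_r [? [? []]].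
  + rewrite incid_join_none => /orP[/andP[/eqP [xa] /eqP [yb]]|/andP[] //]; subst x y.
    have atl : inl a \notin tl by move: xn; rewrite inE negb_or => /andP[].
    case: (walk_phase2 W atl) => tlB [esB [htl hes WB]].
    exists [::], [::], tlB, esB; split => //=; first by rewrite htl.
    by rewrite hes.
    split => //; move: L; rewrite htl; case: tlB {htl hes WB} => [|t tlB] /=; first by case.
    by rewrite last_map => [] [].
Qed.

Lemma walk_map_r (M N : mgraph) (a : vert M) (b : vert N) (c : vert N) tl es :
  walk (G := gjoin a b) (inr c) (map inr tl) (map (fun e => Some (inr e)) es) = walk c tl es.
Proof.
elim: tl c es => [|y tl IH] c [|e es] //=.
by rewrite IH incid_join_some incid_sum_rr.
Qed.

Lemma walk_forward (M N : mgraph) (a : vert M) (b : vert N) (x : vert M) tlA esA tlB esB :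
  walk x tlA esA -> last x tlA = a -> walk b tlB esB ->
  walk (G := gjoin a b) (inl x) (map inl tlA ++ inr b :: map inr tlB)
    (map (fun e => Some (inl e)) esA ++ None :: map (fun e => Some (inr e)) esB).
Proof.
elim: tlA x esA => [|y tl IH] x [|e es] //=.
  move=> _ -> WB; rewrite walk_map_r WB incid_join_none !eqxx //.
move=> /andP[I W] L WB; rewrite incid_join_some incid_sum_ll I /=.
exact: IH.
Qed.



Lemma usp_path (G : mgraph) (x : vert G) tl es : @is_usp G (x :: tl) es ->
  [/\ is_uv_path x (last x tl) (x :: tl) es,
      (forall vs' es', is_uv_path x (last x tl) vs' es' -> size (x :: tl) <= size vs') &
      (forall vs' es', is_uv_path x (last x tl) vs' es' -> size vs' = size (x :: tl) ->
           vs' = x :: tl /\ es' = es)].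
Proof.
case=> u [v [P S U]].
have := P; rewrite pathE => /and4P[/eqP hu _ /eqP hv _]; subst u v.
by split.
Qed.

Lemma join_usp (M N : mgraph) (xA : vert M) tlA esA (xB : vert N) tlB esB :
  @is_usp M (xA :: tlA) esA -> @is_usp N (xB :: tlB) esB ->
  @is_usp (gjoin (last xA tlA) xB) (map inl (xA :: tlA) ++ map inr (xB :: tlB))
     (map (fun e => Some (inl e)) esA ++ None :: map (fun e => Some (inr e)) esB).
Proof.
move=> UA UB.
case: (usp_path UA) => PA SA QA; case: (usp_path UB) => PB SB QB.
have := PA; rewrite pathE => /and4P[_ uA _ WA].
have := PB; rewrite pathE => /and4P[_ uB _ WB].
have inl_inj : injective (@inl (vert M) (vert N)) by move=> p q [].
have inr_inj : injective (@inr (vert M) (vert N)) by move=> p q [].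
have uniqE : forall s1 s2, uniq (map inl s1 ++ map inr s2 : seq (vert M + vert N)) = uniq s1 && uniq s2.
  move=> s1 s2; rewrite cat_uniq (map_inj_uniq inl_inj) (map_inj_uniq inr_inj).
  have -> : has (mem (map inl s1)) (map inr s2 : seq (vert M + vert N)) = false.
    by apply/hasPn => w /mapP[y _ ->]; apply/mapP => [[z _]].
  by [].
have dec : forall vs' es', is_uv_path (G := gjoin (last xA tlA) xB) (inl xA) (inr (last xB tlB)) vs' es' ->
  exists tlA' esA' tlB' esB', [/\ vs' = map inl (xA :: tlA') ++ map inr (xB :: tlB'),
     es' = map (fun e => Some (inl e)) esA' ++ None :: map (fun e => Some (inr e)) esB',
     is_uv_path xA (last xA tlA) (xA :: tlA') esA' &
     is_uv_path xB (last xB tlB) (xB :: tlB') esB'].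
  move=> [|y tl] es'; rewrite pathE // => /and4P[/eqP -> U /eqP L W].
  case: (walk_phase1 W U L) => tlA' [esA' [tlB' [esB' [htl hes WA' LA' [WB' LB']]]]].
  have U' : uniq (map inl (xA :: tlA') ++ map inr (xB :: tlB') : seq (vert M + vert N)).
    by move: U; rewrite htl.
  rewrite uniqE in U'; case/andP: U' => U1 U2.
  exists tlA', esA', tlB', esB'; split.
  - by rewrite htl.
  - exact: hes.
  - by rewrite pathE eqxx U1 LA' eqxx WA'.
  - by rewrite pathE eqxx U2 LB' eqxx WB'.
exists (inl xA), (inr (last xB tlB)); split.
  rewrite pathE; apply/and4P; split.
  + exact/eqP.
  + by move: (uniqE (xA :: tlA) (xB :: tlB)); rewrite uA uB.
  + by rewrite last_cat /= last_map.
  + exact: walk_forward.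
- move=> vs' es' /dec [tlA' [esA' [tlB' [esB' [-> _ PA' PB']]]]].
  rewrite !size_cat !size_map.
  exact: leq_add (SA _ _ PA') (SB _ _ PB').
- move=> vs' es' /dec [tlA' [esA' [tlB' [esB' [-> -> PA' PB']]]]].
  rewrite !size_cat !size_map => Sz.
  have h1 := SA _ _ PA'; have h2 := SB _ _ PB'.
  have e1 : size (xA :: tlA') = size (xA :: tlA) by apply/eqP; rewrite eqn_leq h1; move: Sz h2 => /=; lia.
  have e2 : size (xB :: tlB') = size (xB :: tlB) by move: Sz h1 h2 e1 => /=; lia.
  case: (QA _ _ PA' e1) => [[->] ->]; case: (QB _ _ PB' e2) => [[->] ->].
  by [].
Qed.


Lemma embed_bij_minor M N f g : @embed M N f g -> bijective f -> bijective g -> minor N M.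
Proof.
move=> E [f' c1 c2] [g' d1 d2].
apply: (@embed_minor _ _ f' g'); split; try exact: can_inj c2; try exact: can_inj d2.
move=> e; rewrite -(incid_embed E) c2 c2 d2; exact: incid_ends.
Qed.

Lemma edge_sub (G : mgraph) (X Y : {set vert G}) (sXY : X \subset Y) (e : edge G) :
  ((ends e).1 \in X) && ((ends e).2 \in X) -> ((ends e).1 \in Y) && ((ends e).2 \in Y).
Proof. by case/andP => h1 h2; rewrite !(subsetP sXY). Qed.

Lemma iso_union (G : mgraph) (A B : {set vert G}) :
  [disjoint A & B] ->
  (forall e, ((ends e).1 \in A) = ((ends e).2 \in A)) ->
  (forall e, ((ends e).1 \in B) = ((ends e).2 \in B)) ->
  minor (induced (A :|: B)) (gsum (induced A) (induced B)).
Proof.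
move=> D cA cB.
pose hv : vert (gsum (induced A) (induced B)) -> vert (induced (A :|: B)) :=
  fun v => match v with
  | inl x => exist _ (val x) (subsetP (subsetUl A B) _ (valP x))
  | inr y => exist _ (val y) (subsetP (subsetUr A B) _ (valP y)) end.
pose he : edge (gsum (induced A) (induced B)) -> edge (induced (A :|: B)) :=
  fun v => match v with
  | inl x => exist _ (val x) (edge_sub (subsetUl A B) (valP x))
  | inr y => exist _ (val y) (edge_sub (subsetUr A B) (valP y)) end.
have dis : forall x, x \in A -> x \in B -> False by move=> x xA; rewrite (disjointFr D xA).
have E : embed hv he.
  split.
  - move=> [x|x] [y|y] /(congr1 val) /= h.
    + by congr inl; apply: val_inj.
    + by move: (valP x) (valP y) => /= hx hy; case: (dis _ hx); rewrite h.
    + by move: (valP x) (valP y) => /= hx hy; case: (dis _ hy); rewrite -h.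
    + by congr inr; apply: val_inj.
  - move=> [x|x] [y|y] /(congr1 val) /= h.
    + by congr inl; apply: val_inj.
    + by move: (valP x) (valP y) => /= /andP[hx _] /andP[hy _]; case: (dis _ hx); rewrite h.
    + by move: (valP x) (valP y) => /= /andP[hx _] /andP[hy _]; case: (dis _ hy); rewrite -h.
    + by congr inr; apply: val_inj.
  - by case=> e; rewrite incid_ind /=; exact: incid_ends.
apply: (embed_bij_minor E).
  case: E => hi _ _; apply: inj_surj_bij => // w.
  case: (boolP (val w \in A)) => h.
    by exists (inl (exist _ (val w) h)); apply: val_inj.
  have h' : val w \in B by move: (valP w); rewrite inE (negbTE h).
  by exists (inr (exist _ (val w) h')); apply: val_inj.
case: E => _ hi _; apply: inj_surj_bij => // w.
case/andP: (valP w); rewrite !inE => h1 h2.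
case: (boolP ((ends (val w)).1 \in A)) => h.
  have h' : ((ends (val w)).1 \in A) && ((ends (val w)).2 \in A) by rewrite -cA h.
  by exists (inl (exist _ (val w) h')); apply: val_inj.
have hb : (ends (val w)).1 \in B by move: h1; rewrite (negbTE h).
have h' : ((ends (val w)).1 \in B) && ((ends (val w)).2 \in B) by rewrite -cB hb.
by exists (inr (exist _ (val w) h')); apply: val_inj.
Qed.

Lemma usp_le_card (H : mgraph) : usp H <= #|vert H|.
Proof.
rewrite /usp; apply/bigmax_leqP => i _; by rewrite -ltnS ltn_ord.
Qed.

Lemma arith1 (X Y a b u : nat) : a <= X -> b <= Y -> a + b <= u -> X + Y - u <= X - a + (Y - b).
Proof. lia. Qed.

Lemma binary (G : mgraph) (A B : {set vert G}) :
  loopless G -> 0 < #|A| -> 0 < #|B| -> [disjoint A & B] ->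
  (forall e, ((ends e).1 \in A) = ((ends e).2 \in A)) ->
  (forall e, ((ends e).1 \in B) = ((ends e).2 \in B)) ->
  spfloor (induced (A :|: B)) <= spfloor (induced A) + spfloor (induced B).
Proof.
move=> L hA hB D cA cB.
case: (spfloor_witness (is_graph_ind L hA)) => HA [gHA mA <-].
case: (spfloor_witness (is_graph_ind L hB)) => HB [gHB mB <-].
case/andP: (gHA) => cHA LA; case/andP: (gHB) => cHB LB.
case: (usp_attained cHA) => [[|xA tlA] [esA [UA SA]]].
  by case: UA => u [v [P _ _]]; rewrite pathE in P.
case: (usp_attained cHB) => [[|xB tlB] [esB [UB SB]]].
  by case: UB => u [v [P _ _]]; rewrite pathE in P.
set J := gjoin (last xA tlA) xB.
have gJ : is_graph J by apply: gjoin_graph.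
have m : minor (induced (A :|: B)) J.
  apply: minor_trans (iso_union D cA cB) _.
  apply: minor_trans (minor_sum mA mB) _.
  exact: sum_join_minor.
apply: leq_trans (spfloor_le gJ m) _.
have U := join_usp UA UB.
have h := usp_le U.
rewrite size_cat !size_map in h.
have c1 := usp_le_card HA; have c2 := usp_le_card HB.
rewrite /sp /J /= card_sum.
rewrite /J -SA -SB in h *.
rewrite -SA in c1; rewrite -SB in c2.
move: c1 c2 h; clear; move: (size _) (size _) (usp _) => p q r.
move: #|vert HA| #|vert HB| => s t.
lia.
Qed.


Lemma comp_nonempty (G : mgraph) (C : {set vert G}) : C \in components G -> 0 < #|C|.
Proof. by case/imsetP => x _ ->; apply/card_gt0P; exists x; exact: mem_comp. Qed.

Lemma upper_F (G : mgraph) : loopless G -> forall n (F : {set {set vert G}}),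
  #|F| = n.+1 -> F \subset components G ->
  spfloor (induced (cover F)) <= \sum_(C in F) spfloor (induced C).
Proof.
move=> L; elim=> [|n IH] F cF sF.
  have /cards1P [C ->] : #|F| == 1 by rewrite cF.
  by rewrite cover1 big_set1.
have [C CF] : exists C, C \in F by apply/card_gt0P; rewrite cF.
set F' := F :\ C.
have cF' : #|F'| = n.+1 by move: cF; rewrite (cardsD1 C F) CF add1n => [[]].
have sF' : F' \subset components G by apply: subset_trans sF; apply: subD1set.
have hc : cover F = C :|: cover F' by rewrite /cover (big_setD1 C).
rewrite hc (big_setD1 C CF) /=.
have Ccomp : C \in components G by apply: (subsetP sF).
apply: leq_trans (binary L _ _ _ _ _) _.
- exact: comp_nonempty.
- have [D DF] : exists D, D \in F' by apply/card_gt0P; rewrite cF'.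
  have [z zD] : exists z, z \in D.
    by apply/card_gt0P; apply: comp_nonempty; apply: (subsetP sF').
  by apply/card_gt0P; exists z; apply/bigcupP; exists D.
- rewrite -setI_eq0; apply/eqP/setP => z; rewrite !inE.
  apply/negP => /andP[zC /bigcupP [D DF zD]].
  have DC : D != C by move: DF; rewrite !inE => /andP[].
  have Dcomp : D \in components G by apply: (subsetP sF').
  move/trivIsetP: (triv_components G) => /(_ _ _ Ccomp Dcomp).
  rewrite eq_sym => /(_ DC) dis.
  by rewrite (disjointFr dis zC) in zD.
- by move=> e; apply: comp_closed.
- move=> e; apply/bigcupP/bigcupP => [] [D DF h]; exists D => //.
    by rewrite -(comp_closed e (subsetP sF' _ DF)).
  by rewrite (comp_closed e (subsetP sF' _ DF)).
by rewrite leq_add2l; apply: IH.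
Qed.

Lemma upper (G : mgraph) : is_graph G ->
  spfloor G <= \sum_(C in components G) spfloor (induced C).
Proof.
case/andP=> cG L.
have [x _] : exists x, x \in vert G by apply/card_gt0P.
have : 0 < #|components G| by apply/card_gt0P; exists (Defs.comp x); apply: imset_f.
case cC : #|components G| => [|n] // _.
have h := upper_F L cC (subxx _).
rewrite cover_components in h.
apply: leq_trans h.
apply: spfloor_mono.
  by apply: is_graph_ind => //; apply/card_gt0P; exists x.
have hf : forall y : vert G, y \in [set: vert G] by move=> y; rewrite inE.
have hg : forall e : edge G, ((ends e).1 \in [set: vert G]) && ((ends e).2 \in [set: vert G]).
  by move=> e; rewrite !inE.
pose f : vert G -> vert (induced [set: vert G]) := fun y => exist _ y (hf y).
pose g : edge G -> edge (induced [set: vert G]) := fun e => exist _ e (hg e).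
apply: (@embed_minor _ _ f g); split.
- by move=> a b [].
- by move=> a b [].
- by move=> e; rewrite incid_ind /= incid_ends.
Qed.

Lemma lower (G : mgraph) : is_graph G ->
  \sum_(C in components G) spfloor (induced C) <= spfloor G.
Proof.
move=> gG; case: (spfloor_witness gG) => H [gH m <-].
exact: lower_bound gH m _ (triv_components G).
Qed.

Theorem corollary3p2 (G : mgraph) :
  is_graph G ->
  spfloor G = \sum_(C in components G) spfloor (induced C).
Proof.
move=> gG; apply/eqP; rewrite eqn_leq upper //=; exact: lower.
Qed.
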